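(* For any graph $G$ with vertex set $[n]$, let $$f(G):=\min\{d\ge1:\ \exists \text{ subspaces } \mathcal{L}_1,\dots,\mathcal{L}_n\subseteq\mathbb{C}^d \text{ such that for all distinct } i,j\in[n],\ \mathcal{L}_i\perp\mathcal{L}_j \iff i\not\sim j\}.$$ Then $$f(G)=\min\{\mathrm{cpsd}\text{-}\mathrm{rank}(X):\ X \text{ is an } n\times n \text{ cpsd matrix with } S(X)=G\}.$$
   Context: Graphs are simple (no loops). An $n\times n$ matrix $X$ is completely positive semidefinite (cpsd) if there exist $d\ge1$ and Hermitian positive semidefinite $d\times d$ matrices $P_1,\dots,P_n$ with $X_{ij}=\mathrm{Tr}(P_iP_j)$ for all $i,j$; the cpsd-rank of $X$ is the least such $d$. The support graph $S(X)$ of a symmetric $n\times n$ matrix $X$ is the graph on $[n]$ with $u\sim v$ iff $u\ne v$ and $X_{uv}\neq0$. Orthogonality of subspaces is with respect to the standard inner product on $\mathbb{C}^d$. *)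

(* Defs.v *)
From HB Require Import structures.
From mathcomp Require Import all_boot all_order all_algebra.
From mathcomp Require Import spectral.
From mathcomp Require Import complex.
From mathcomp Require Import reals.
Set Implicit Arguments. Unset Strict Implicit. Unset Printing Implicit Defensive.
Import Order.TTheory GRing.Theory Num.Theory.
Local Open Scope ring_scope.
Local Open Scope sesquilinear_scope.

Notation Cx R := (complex R).

Definition simple_graph n (G : rel 'I_n) :=
  symmetric G /\ irreflexive G.

Definition hpsd (C : numClosedFieldType) d (P : 'M[C]_d) :=
  P ^t* = P /\ forall v : 'rV[C]_d, 0 <= (v *m P *m v ^t*) 0 0.

Definition cpsd_rep (C : numClosedFieldType) n d (X : 'M[C]_n) :=
  exists P : 'I_n -> 'M[C]_d,
    (forall i, hpsd (P i)) /\ forall i j, X i j = \tr (P i *m P j).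

Definition cpsd (C : numClosedFieldType) n (X : 'M[C]_n) :=
  exists d, (1 <= d)%N /\ cpsd_rep d X.

Definition is_cpsd_rank (C : numClosedFieldType) n (X : 'M[C]_n) d :=
  [/\ (1 <= d)%N, cpsd_rep d X & forall d', (1 <= d')%N -> cpsd_rep d' X -> (d <= d')%N].

Definition support_is (C : numClosedFieldType) n (X : 'M[C]_n) (G : rel 'I_n) :=
  forall u v : 'I_n, u != v -> (X u v != 0) = G u v.

(* Subspaces L_i of C^d, each given as the row space of a matrix L i;
   L_i and L_j are orthogonal iff L i *m (L j)^* = 0. *)
Definition orth_subspaces (C : numClosedFieldType) d p q
  (A : 'M[C]_(p, d)) (B : 'M[C]_(q, d)) := A *m B ^t* == 0.

Definition orth_rep (C : numClosedFieldType) n (G : rel 'I_n) d :=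
  exists L : 'I_n -> 'M[C]_d,
    forall i j : 'I_n, i != j -> (orth_subspaces (L i) (L j) = ~~ G i j).

Definition least_pos (P : nat -> Prop) d :=
  [/\ (1 <= d)%N, P d & forall d', (1 <= d')%N -> P d' -> (d <= d')%N].

(* Main.v *)
Require Import Defs.
From HB Require Import structures.
From mathcomp Require Import all_boot all_order all_algebra.
From mathcomp Require Import spectral complex reals.
From Stdlib Require Classical_Prop.
Import GRing.Theory Num.Theory.
Local Open Scope ring_scope.
Local Open Scope sesquilinear_scope.
Set Implicit Arguments. Unset Strict Implicit.

Section Key.
Variable C : numClosedFieldType.

Lemma trMMtE m n (M : 'M[C]_(m,n)) :
  \tr (M *m M^t*) = \sum_i \sum_k `|M i k| ^+ 2.
Proof.
rewrite /mxtrace; apply: eq_bigr => i _; rewrite mxE.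
by apply: eq_bigr => k _; rewrite !mxE normCK.
Qed.

Lemma trMMt_eq0 m n (M : 'M[C]_(m,n)) : (\tr (M *m M^t*) == 0) = (M == 0).
Proof.
apply/eqP/eqP => [H|->]; last by rewrite mul0mx mxtrace0.
rewrite trMMtE in H.
apply/matrixP => i k; rewrite mxE.
have H1 : \sum_k `|M i k| ^+ 2 = 0.
  apply: (psumr_eq0P _ H) => // j _.
  by apply: sumr_ge0 => k' _; rewrite exprn_ge0.
have H2 : `|M i k| ^+ 2 = 0.
  apply: (psumr_eq0P _ H1) => // j _.
  by rewrite exprn_ge0.
by move/eqP: H2; rewrite sqrf_eq0 normr_eq0 => /eqP.
Qed.

Lemma tmx_eq0 m n (M : 'M[C]_(m,n)) : (M^t* == 0) = (M == 0).
Proof.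
apply/eqP/eqP => [H|->]; last by rewrite trmx0 map_mx0.
by rewrite -[M]trmxCK H trmx0 map_mx0.
Qed.

Lemma key d (L1 L2 : 'M[C]_d) :
  (\tr ((L1^t* *m L1) *m (L2^t* *m L2)) == 0) = (L1 *m L2^t* == 0).
Proof.
have -> : \tr ((L1^t* *m L1) *m (L2^t* *m L2)) =
   \tr ((L2 *m L1^t*) *m (L2 *m L1^t*)^t*).
  rewrite !mulmxA mxtrace_mulC !mulmxA.
  by rewrite trmx_mul map_mxM trmxCK !mulmxA.
by rewrite trMMt_eq0 -tmx_eq0 trmx_mul map_mxM trmxCK.
Qed.

End Key.
Section Fact.
Variable C : numClosedFieldType.

Lemma delta_diag d (D : 'rV[C]_d) k :
  ((delta_mx (0:'I_1) k : 'rV[C]_d) *m diag_mx D *m (delta_mx (0:'I_1) k : 'rV[C]_d)^t*) 0 0 = D 0 k.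
Proof.
rewrite mul_mx_diag mxE (bigD1 k) //= big1 ?addr0.
  by rewrite !mxE !eqxx /= conjC1 mulr1 mul1r.
by move=> j /negPf Hj; rewrite !mxE Hj /= !mul0r.
Qed.

Definition fact_mx d (P : 'M[C]_d) : 'M[C]_d :=
  diag_mx (\row_k sqrtC (spectral_diag P 0 k)) *m spectralmx P.
Arguments fact_mx {d}.

Lemma hpsd_fact d (P : 'M[C]_d) : hpsd P -> P = (fact_mx P)^t* *m fact_mx P.
Proof.
move=> [Ph Ppos].
have Pn : P \is normalmx by apply/normalmxP; rewrite Ph.
have PE := orthomx_spectralP Pn.
set U := spectralmx P in PE; set D := spectral_diag P in PE.
have Uu : U \is unitarymx := spectral_unitarymx P.
rewrite invmx_unitary // in PE.
have Dge0 : forall k, 0 <= D 0 k.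
  move=> k; have := Ppos ((delta_mx (0:'I_1) k : 'rV[C]_d) *m U).
  rewrite PE trmx_mul map_mxM !mulmxA.
  by rewrite !(mulmxtVK _ Uu) delta_diag.
rewrite /fact_mx -/U -/D.
rewrite trmx_mul map_mxM tr_diag_mx map_diag_mx !mulmxA PE.
congr (_ *m _); rewrite -mulmxA mulmx_diag; congr (_ *m diag_mx _).
apply/rowP => k; rewrite !mxE /= geC0_conj ?sqrtC_ge0 //.
by rewrite -expr2 sqrtCK.
Qed.

End Fact.
Section Exist.
Variable C : numClosedFieldType.
Variables (n : nat) (G : rel 'I_n).
Hypothesis HG : simple_graph G.

Definition gg (i : 'I_n) (S : {set 'I_n}) := [exists j, (S == [set i; j]) && G i j].

Lemma gg_both i j S : i != j -> (gg i S && gg j S) = (S == [set i; j]) && G i j.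
Proof.
move=> nij; case: HG => Hs _.
apply/andP/andP.
  move=> [/existsP[a /andP[/eqP Sa Gia]] /existsP[b /andP[/eqP Sb Gjb]]].
  have : j \in S by rewrite Sb set21.
  rewrite Sa in_set2 eq_sym (negPf nij) /= => /eqP ja.
  by subst a; split.
move=> [/eqP -> Gij]; split; apply/existsP.
  by exists j; rewrite eqxx Gij.
by exists i; rewrite setUC eqxx /= -Hs Gij.
Qed.

Definition dd := #|{: {set 'I_n}}|.
Definition LL (i : 'I_n) : 'M[C]_dd :=
  \matrix_(a, k) ((gg i (enum_val k))%:R).

Lemma LL_entry i j a b :
  (LL i *m (LL j)^t*) a b = \sum_(S : {set 'I_n}) ((gg i S && gg j S)%:R : C).
Proof.
rewrite mxE (big_enum_val (fun S => ((gg i S && gg j S)%:R : C))) /=.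
by apply: eq_bigr => k _; rewrite !mxE conjC_nat -natrM mulnb.
Qed.

Lemma dd_gt0 : (1 <= dd)%N.
Proof. by rewrite /dd (cardD1 set0) inE. Qed.

Lemma orth_exists : @orth_rep C n G dd.
Proof.
exists LL => i j nij; rewrite /orth_subspaces.
have E : forall a b, (LL i *m (LL j)^t*) a b = (G i j)%:R.
  move=> a b; rewrite LL_entry.
  under eq_bigr => S _ do rewrite gg_both //.
  case Gij: (G i j).
    rewrite (bigD1 [set i; j]) //= eqxx big1 ?addr0 //.
    by move=> S /negPf ->.
  by rewrite big1 // => S _; rewrite andbF.
have k0 : 'I_dd by exact: (Ordinal dd_gt0).
apply/eqP/idP.
  move=> /matrixP /(_ k0 k0); rewrite E mxE.
  by case: (G i j) => //= /eqP; rewrite oner_eq0.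
move=> nG; apply/matrixP => a b; rewrite E mxE.
by rewrite (negPf nG).
Qed.
End Exist.

Lemma least_ex (P : nat -> Prop) : (exists d, (1 <= d)%N /\ P d) -> exists d, least_pos P d.
Proof.
move=> [d [H1 Hd]].
suff : forall m, (exists k, (k <= m)%N /\ (1 <= k)%N /\ P k) -> exists d, least_pos P d.
  by apply; exists d.
elim => [|m IH] [k [Hkm [Hk1 Hk]]].
  by move: Hkm Hk1; rewrite leqn0 => /eqP ->.
case: (Classical_Prop.classic (exists k, (k <= m)%N /\ (1 <= k)%N /\ P k)) => [H|H].
  exact: IH.
exists k; split => // d' Hd'1 Hd'.
case: (leqP k d') => // Hlt; exfalso; apply: H; exists d'; split => //.
by rewrite -ltnS (leq_trans Hlt Hkm).
Qed.

Section Main.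
Variable C : numClosedFieldType.
Variables (n : nat) (G : rel 'I_n).

Lemma step2 d : (1 <= d)%N -> @orth_rep C n G d ->
  exists X : 'M[C]_n, cpsd X /\ support_is X G /\ cpsd_rep d X.
Proof.
move=> d1 [L HL].
pose P i := (L i)^t* *m L i.
have hP : forall i, hpsd (P i).
  move=> i; split; first by rewrite /P trmx_mul map_mxM trmxCK.
  move=> v; rewrite /P mulmxA.
  have -> : v *m (L i)^t* *m L i *m v^t* = (v *m (L i)^t*) *m (v *m (L i)^t*)^t*.
    by rewrite trmx_mul map_mxM trmxCK !mulmxA.
  by rewrite mxE; apply: sumr_ge0 => k _; rewrite !mxE mul_conjC_ge0.
have rep : cpsd_rep d (\matrix_(i, j) \tr (P i *m P j)).
  by exists P; split => // i j; rewrite mxE.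
exists (\matrix_(i, j) \tr (P i *m P j)); split; first by exists d.
split => // u v nuv; rewrite mxE /P key.
by have := HL u v nuv; rewrite /orth_subspaces => ->; rewrite negbK.
Qed.

Lemma step3 d (X : 'M[C]_n) : support_is X G -> cpsd_rep d X -> @orth_rep C n G d.
Proof.
move=> HS [P [hP HX]].
exists (fun i => fact_mx (P i)) => i j nij.
rewrite /orth_subspaces -key -(hpsd_fact (hP i)) -(hpsd_fact (hP j)) -HX.
by rewrite -(HS i j nij) negbK.
Qed.
End Main.

Theorem theorem3p9 (R : realType) (n : nat) (G : rel 'I_n) :
  simple_graph G ->
  exists f : nat,
    least_pos (fun d => @orth_rep (Cx R) n G d) f /\
    least_pos (fun r => exists X : 'M[Cx R]_n,
                  cpsd X /\ support_is X G /\ is_cpsd_rank X r) f.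
Proof.
move=> HG.
have [f [f1 Hf fmin]] : exists f, least_pos (fun d => @orth_rep (Cx R) n G d) f.
  by apply: least_ex; exists (dd n); split; [exact: dd_gt0 | exact: orth_exists].
have [X [cX [sX rX]]] := step2 f1 Hf.
have [r [r1 Hr rmin]] : exists r, least_pos (fun d => cpsd_rep d X) r.
  by apply: least_ex; exists f.
have rf : r = f.
  apply/eqP; rewrite eqn_leq (rmin f f1 rX) /=.
  exact: fmin r r1 (step3 sX Hr).
subst r.
exists f; split; first by split.
split => //; first by exists X; split => //; split => //; split.
move=> r' r'1 [X' [_ [sX' [_ Hr' _]]]].
exact: fmin r' r'1 (step3 sX' Hr').
Qed.
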